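(* Assume (A1). Let $\varepsilon_1\ge 0$, $x\in\mathcal{C}$ and $\beta>\max\{\beta_2(x),\beta_3(x)\}$. If $\|\nabla g(x)\|\le\varepsilon_1$, then $$\|h(x)\|\le\frac{\varepsilon_1}{\beta\,\sigma_{\min}(\mathrm{D}h(x))}\le\varepsilon_1\quad\text{and}\quad \|\mathrm{grad}_{\mathcal{M}_x}f(x)\|\le\Big(1+\frac{C_\lambda(x)}{\beta\,\sigma_{\min}(\mathrm{D}h(x))}\Big)\varepsilon_1\le 2\varepsilon_1,$$ so that $x$ is an $(\varepsilon_1,2\varepsilon_1)$-approximate first-order critical point of the problem $\min f(x)$ subject to $h(x)=0$.
   Context: Let $\mathcal{E}$ be a Euclidean space with inner product $\langle\cdot,\cdot\rangle$ and norm $\|\cdot\|$ (2-norm on $\mathbb{R}^m$), and $f\colon\mathcal{E}\to\mathbb{R}$, $h\colon\mathcal{E}\to\mathbb{R}^m$ be $C^\infty$. $\mathrm{D}h(x)$ is the differential, $\mathrm{D}h(x)^*$ its adjoint, $\sigma_1(\cdot)$ and $\sigma_{\min}(\cdot)=\sigma_m(\cdot)$ the largest and $m$-th singular values. Let $\mathcal{D}=\{x:\operatorname{rank}\mathrm{D}h(x)=m\}$ and for $x\in\mathcal{D}$ let $\lambda(x)=(\mathrm{D}h(x)^* )^\dagger[\nabla f(x)]$ ($\dagger$ = Moore–Penrose pseudo-inverse); $\lambda$ is $C^\infty$ on $\mathcal{D}$. For $\beta\ge0$, Fletcher's augmented Lagrangian is $g(x)=f(x)-\langle h(x),\lambda(x)\rangle+\beta\|h(x)\|^2$.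 For $x\in\mathcal{D}$, $\mathcal{M}_x=\{y:h(y)=h(x)\}$ and $\mathrm{grad}_{\mathcal{M}_x}f(x)=\nabla f(x)-\mathrm{D}h(x)^*[\lambda(x)]$ (the orthogonal projection of $\nabla f(x)$ onto $\ker\mathrm{D}h(x)$). (A1): there are $R,\underline{\sigma}>0$ such that every $x\in\mathcal{C}=\{x:\|h(x)\|\le R\}$ satisfies $\sigma_{\min}(\mathrm{D}h(x))\ge\underline{\sigma}$ (so $\mathcal{C}\subset\mathcal{D}$). For $x\in\mathcal{C}$: $C_\lambda(x)=\|\mathrm{D}\lambda(x)\|_{\mathrm{op}}$, $\beta_2(x)=C_\lambda(x)/\sigma_{\min}(\mathrm{D}h(x))$, $\beta_3(x)=1/\sigma_{\min}(\mathrm{D}h(x))$. A point $x\in\mathcal{D}$ is an $(\varepsilon_0,\varepsilon_1)$-approximate first-order critical point if $\|h(x)\|\le\varepsilon_0$ and $\|\mathrm{grad}_{\mathcal{M}_x}f(x)\|\le\varepsilon_1$. *)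

(* Defs.v *)
(* The Euclidean space E is modelled as R^n = 'rV[R]_n (row vectors) with the
   standard inner product; R^m = 'rV[R]_m.  A linear map R^n -> R^m is
   represented by its matrix A : 'M_(n,m) acting by v |-> v *m A; its adjoint
   is then w |-> w *m A^T. *)
From HB Require Import structures.
From mathcomp Require Import all_boot all_order all_algebra.
From mathcomp Require Import all_classical all_reals all_analysis.
Set Implicit Arguments. Unset Strict Implicit. Unset Printing Implicit Defensive.
Import Order.TTheory GRing.Theory Num.Theory.
Import numFieldNormedType.Exports.
Local Open Scope classical_set_scope.
Local Open Scope ring_scope.

Section Defs.
Variable R : realType.

Definition ei (n : nat) (i : 'I_n) : 'rV[R]_n := delta_mx 0 i.

Definition dotp (n : nat) (u v : 'rV[R]_n) : R := \sum_i u 0 i * v 0 i.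
Definition norm2 (n : nat) (v : 'rV[R]_n) : R := Num.sqrt (dotp v v).

Fixpoint iter_partial (n : nat) (W : normedModType R) (s : seq 'I_n)
    (F : 'rV[R]_n -> W) : 'rV[R]_n -> W :=
  match s with
  | [::] => F
  | i :: s' => fun x => 'D_(ei i) (iter_partial s' F) x
  end.

Definition smooth (n : nat) (W : normedModType R) (F : 'rV[R]_n -> W) : Prop :=
  forall s : seq 'I_n,
    (forall (x : 'rV[R]_n) (i : 'I_n), derivable (iter_partial s F) x (ei i)) /\
    continuous (iter_partial s F).

Definition grad (n : nat) (f : 'rV[R]_n -> R) (x : 'rV[R]_n) : 'rV[R]_n :=
  \row_i ('d f x (ei i)).

Definition jac (n m : nat) (F : 'rV[R]_n -> 'rV[R]_m) (x : 'rV[R]_n)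
  : 'M[R]_(n, m) := \matrix_(i, j) ('d F x (ei i)) 0 j.

(* Moore--Penrose pseudo-inverse: the unique X satisfying the four Penrose
   equations (it always exists and is unique) *)
Definition penrose (p q : nat) (A : 'M[R]_(p, q)) (X : 'M[R]_(q, p)) : Prop :=
  [/\ A *m X *m A = A, X *m A *m X = X,
      (A *m X)^T = A *m X & (X *m A)^T = X *m A].
Definition mp_pinv (p q : nat) (A : 'M[R]_(p, q)) : 'M[R]_(q, p) :=
  xget 0 (penrose A).

Definition opnorm (p q : nat) (A : 'M[R]_(p, q)) : R :=
  sup [set norm2 (v *m A) | v in [set v : 'rV[R]_p | norm2 v <= 1]].

(* sigma_min(A) = sigma_m(A) for A : R^n -> R^m, i.e. the square root of the
   m-th largest eigenvalue of A^* A, equivalently the smallest eigenvalue of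
   A A^* : R^m -> R^m (whose matrix, in our convention, is A^T *m A) *)
Definition sigma_min (n m : nat) (A : 'M[R]_(n, m)) : R :=
  Num.sqrt (inf [set a : R | eigenvalue (A^T *m A) a]).

Definition lam (n m : nat) (f : 'rV[R]_n -> R) (h : 'rV[R]_n -> 'rV[R]_m)
  (x : 'rV[R]_n) : 'rV[R]_m := grad f x *m mp_pinv (jac h x)^T.

Definition fletcher (n m : nat) (f : 'rV[R]_n -> R) (h : 'rV[R]_n -> 'rV[R]_m)
  (beta : R) (x : 'rV[R]_n) : R :=
  f x - dotp (h x) (lam f h x) + beta * norm2 (h x) ^+ 2.

Definition gradM (n m : nat) (f : 'rV[R]_n -> R) (h : 'rV[R]_n -> 'rV[R]_m)
  (x : 'rV[R]_n) : 'rV[R]_n := grad f x - lam f h x *m (jac h x)^T.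

Definition C_lam (n m : nat) (f : 'rV[R]_n -> R) (h : 'rV[R]_n -> 'rV[R]_m)
  (x : 'rV[R]_n) : R := opnorm (jac (lam f h) x).
Definition beta2 (n m : nat) (f : 'rV[R]_n -> R) (h : 'rV[R]_n -> 'rV[R]_m)
  (x : 'rV[R]_n) : R := C_lam f h x / sigma_min (jac h x).
Definition beta3 (n m : nat) (h : 'rV[R]_n -> 'rV[R]_m)
  (x : 'rV[R]_n) : R := (sigma_min (jac h x))^-1.

Definition inD (n m : nat) (h : 'rV[R]_n -> 'rV[R]_m) (x : 'rV[R]_n) : Prop :=
  \rank (jac h x) = m.

Definition approx_crit (n m : nat) (f : 'rV[R]_n -> R) (h : 'rV[R]_n -> 'rV[R]_m)
  (eps0 eps1 : R) (x : 'rV[R]_n) : Prop :=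
  [/\ inD h x, norm2 (h x) <= eps0 & norm2 (gradM f h x) <= eps1].

End Defs.

(* Main.v *)
Require Import Defs.
From HB Require Import structures.
From mathcomp Require Import all_boot all_order all_algebra.
From mathcomp Require Import all_classical all_reals all_analysis.
Import Order.TTheory GRing.Theory Num.Theory.
Import numFieldNormedType.Exports.
Local Open Scope classical_set_scope.
Local Open Scope ring_scope.
Set Implicit Arguments. Unset Strict Implicit. Unset Printing Implicit Defensive.
From mathcomp Require Import ring lra.

Section LA.
Variable R : realType.

Lemma dotpE n (u v : 'rV[R]_n) : dotp u v = (u *m v^T) 0 0.
Proof. by rewrite /dotp mxE; apply: eq_bigr => i _; rewrite mxE. Qed.

Lemma dotpC n (u v : 'rV[R]_n) : dotp u v = dotp v u.
Proof. by rewrite /dotp; apply: eq_bigr => i _; rewrite mulrC. Qed.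

Lemma dotpDl n (u v w : 'rV[R]_n) : dotp (u + v) w = dotp u w + dotp v w.
Proof. by rewrite !dotpE mulmxDl mxE. Qed.

Lemma dotpZl n a (u w : 'rV[R]_n) : dotp (a *: u) w = a * dotp u w.
Proof. by rewrite !dotpE -scalemxAl mxE. Qed.

Lemma dotpNl n (u w : 'rV[R]_n) : dotp (- u) w = - dotp u w.
Proof. by rewrite !dotpE mulNmx mxE. Qed.

Lemma dotpBl n (u v w : 'rV[R]_n) : dotp (u - v) w = dotp u w - dotp v w.
Proof. by rewrite dotpDl dotpNl. Qed.

Lemma dotpDr n (u v w : 'rV[R]_n) : dotp w (u + v) = dotp w u + dotp w v.
Proof. by rewrite dotpC dotpDl !(dotpC w). Qed.

Lemma dotpZr n a (u w : 'rV[R]_n) : dotp w (a *: u) = a * dotp w u.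
Proof. by rewrite dotpC dotpZl dotpC. Qed.

Lemma dotpNr n (u w : 'rV[R]_n) : dotp w (- u) = - dotp w u.
Proof. by rewrite dotpC dotpNl dotpC. Qed.

Lemma dotpBr n (u v w : 'rV[R]_n) : dotp w (u - v) = dotp w u - dotp w v.
Proof. by rewrite dotpDr dotpNr. Qed.

Lemma dotp0l n (w : 'rV[R]_n) : dotp 0 w = 0.
Proof. by rewrite /dotp big1 // => i _; rewrite mxE mul0r. Qed.

Lemma dotp0r n (w : 'rV[R]_n) : dotp w 0 = 0.
Proof. by rewrite dotpC dotp0l. Qed.

Lemma dotp_ge0 n (v : 'rV[R]_n) : 0 <= dotp v v.
Proof. by rewrite /dotp sumr_ge0 // => i _; rewrite -expr2 sqr_ge0. Qed.

Lemma dotp_eq0 n (v : 'rV[R]_n) : dotp v v = 0 -> v = 0.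
Proof.
move=> /eqP; rewrite /dotp psumr_eq0; last by move=> i _; rewrite -expr2 sqr_ge0.
move=> /allP H; apply/rowP => i; rewrite mxE.
by have := H i (mem_index_enum _); rewrite -expr2 sqrf_eq0 => /eqP.
Qed.

Lemma dotp_mulmx n m (u : 'rV[R]_n) (A : 'M[R]_(n, m)) (w : 'rV[R]_m) :
  dotp (u *m A) w = dotp u (w *m A^T).
Proof. by rewrite !dotpE trmx_mul trmxK mulmxA. Qed.

Lemma norm2_ge0 n (v : 'rV[R]_n) : 0 <= norm2 v.
Proof. exact: sqrtr_ge0. Qed.

Lemma norm2_sq n (v : 'rV[R]_n) : norm2 v ^+ 2 = dotp v v.
Proof. by rewrite /norm2 sqr_sqrtr // dotp_ge0. Qed.

Lemma norm2_eq0 n (v : 'rV[R]_n) : norm2 v = 0 -> v = 0.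
Proof. by move=> H; apply: dotp_eq0; rewrite -norm2_sq H expr0n. Qed.

Lemma norm2_0 n : norm2 (0 : 'rV[R]_n) = 0.
Proof. by rewrite /norm2 dotp0l sqrtr0. Qed.

Lemma norm2Z n a (v : 'rV[R]_n) : norm2 (a *: v) = `|a| * norm2 v.
Proof.
rewrite /norm2 dotpZl dotpZr mulrA sqrtrM; last by rewrite -expr2 sqr_ge0.
by rewrite sqrtr_sqr.
Qed.

Lemma norm2N n (v : 'rV[R]_n) : norm2 (- v) = norm2 v.
Proof. by rewrite /norm2 dotpNl dotpNr opprK. Qed.

Lemma CS n (u v : 'rV[R]_n) : dotp u v <= norm2 u * norm2 v.
Proof.
set a := norm2 u; set b := norm2 v.
have [a0|a0] := eqVneq a 0.
  by rewrite (norm2_eq0 a0) dotp0l a0 mul0r.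
have [b0|b0] := eqVneq b 0.
  by rewrite (norm2_eq0 b0) dotp0r b0 mulr0.
have ha : 0 < a by rewrite lt0r a0 norm2_ge0.
have hb : 0 < b by rewrite lt0r b0 norm2_ge0.
have := dotp_ge0 (b *: u - a *: v).
rewrite !(dotpBl, dotpBr, dotpZl, dotpZr) -!norm2_sq -/a -/b (dotpC v u).
move=> H.
have : 0 <= 2 * a * b * (a * b - dotp u v) by nra.
by rewrite pmulr_rge0 ?subr_ge0 // !mulr_gt0.
Qed.

Lemma CSabs n (u v : 'rV[R]_n) : `|dotp u v| <= norm2 u * norm2 v.
Proof.
rewrite ler_norml CS andbT -(norm2N u) lerNl -dotpNl; exact: CS.
Qed.

Lemma norm2D n (u v : 'rV[R]_n) : norm2 (u + v) <= norm2 u + norm2 v.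
Proof.
rewrite -(@ler_pXn2r _ 2) ?nnegrE ?addr_ge0 ?norm2_ge0 //.
rewrite norm2_sq dotpDl !dotpDr -!norm2_sq (dotpC v u).
have := CS u v; nra.
Qed.

End LA.

Section SIG.
Variable R : realType.

Lemma cont_sum (T : topologicalType) (I : Type) (r : seq I) (F : I -> T -> R) :
  (forall i, continuous (F i)) -> continuous (fun x => \sum_(i <- r) F i x).
Proof.
move=> HF; elim: r => [|a r IH].
  under eq_fun do rewrite big_nil; exact: cst_continuous.
under eq_fun do rewrite big_cons.
by move=> x; apply: continuousD; [apply: HF | apply: IH].
Qed.

Lemma cont_coord n i : continuous (fun v : 'rV[R]_n => v 0 i).
Proof. exact: coord_continuous. Qed.

Lemma cont_mulmx_coord n m (M : 'M[R]_(n, m)) j :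
  continuous (fun v : 'rV[R]_n => (v *m M) 0 j).
Proof.
under eq_fun do rewrite mxE.
apply: cont_sum => i x; apply: continuousM; first exact: cont_coord.
exact: cst_continuous.
Qed.

Lemma cont_quad n (M : 'M[R]_n) : continuous (fun v : 'rV[R]_n => dotp v (v *m M)).
Proof.
rewrite /dotp; apply: cont_sum => i x; apply: continuousM.
  exact: cont_coord.
exact: cont_mulmx_coord.
Qed.

Lemma cont_sqn n : continuous (fun v : 'rV[R]_n => dotp v v).
Proof.
rewrite /dotp; apply: cont_sum => i x; apply: continuousM; exact: cont_coord.
Qed.

Lemma coord_sq_le n (v : 'rV[R]_n) i : v 0 i ^+ 2 <= dotp v v.
Proof.
rewrite /dotp (bigD1 i) //= -expr2 lerDl sumr_ge0 // => j _.
by rewrite -expr2 sqr_ge0.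
Qed.

Definition sphere n := [set v : 'rV[R]_n | dotp v v = 1].
Arguments sphere : clear implicits.

Lemma sphere_compact n : compact (sphere n).
Proof.
apply: bounded_closed_compact.
  exists 1; split => // M /ltW M1 v /= Sv.
  rewrite [leLHS]/Num.Def.normr /= mx_normrE; apply: bigmax_le => [|ij _]; first exact: le_trans M1.
  apply: le_trans M1.
  have := coord_sq_le v ij.2; rewrite Sv (ord1 ij.1) => H.
  by rewrite -(@ler_pXn2r _ 2) ?nnegrE // real_normK ?num_real // expr1n.
have -> : sphere n = (fun v => dotp v v) @^-1` [set 1] by [].
apply: (proj1 (continuous_closedP _)); first exact: cont_sqn.
exact: closed_eq.
Qed.

Lemma quad_lin0 (a b : R) : (forall t, 0 <= a * t + b * t ^+ 2) -> a = 0.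
Proof.
move=> H; apply/eqP; apply: contraT => a0.
have hb : 0 < 1 + `|b| by rewrite ltr_pwDl // normr_ge0.
have ha2 : 0 < a ^+ 2 by rewrite lt_def sqr_ge0 andbT expf_eq0 negb_and a0 orbT.
set t := - a / (1 + `|b|).
have := H t; rewrite /t.
have -> : a * (- a / (1 + `|b|)) + b * (- a / (1 + `|b|)) ^+ 2 =
  a ^+ 2 / (1 + `|b|) ^+ 2 * (b - (1 + `|b|)).
  by field; rewrite gt_eqF.
rewrite pmulr_rge0; last by apply: divr_gt0 => //; rewrite exprn_gt0.
by have := ler_norm b; lra.
Qed.

Lemma rayleigh n (M : 'M[R]_n) :
  M^T = M -> has_lbound [set a | eigenvalue M a] ->
  forall v, inf [set a | eigenvalue M a] * dotp v v <= dotp v (v *m M).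
Proof.
move=> MT hlb v.
set S := [set a | eigenvalue M a].
set q := fun v : 'rV[R]_n => dotp v (v *m M).
have qZ r (u : 'rV[R]_n) : q (r *: u) = r ^+ 2 * q u.
  by rewrite /q -scalemxAl dotpZl dotpZr mulrA expr2.
have [->|v0] := eqVneq v 0.
  by rewrite dotp0l mulr0 /q mul0mx dotp0l.
have dv : 0 < dotp v v.
  by rewrite lt0r dotp_ge0 andbT; apply: contra v0 => /eqP /dotp_eq0 ->.
have Sn : sphere n !=set0.
  exists ((norm2 v)^-1 *: v); rewrite /sphere /= dotpZl dotpZr mulrA -expr2.
  by rewrite exprVn norm2_sq mulVf // gt_eqF.
have [c Sc cmin] := EVT_min_rV Sn (@sphere_compact n)
  (continuous_subspaceT (@cont_quad n M)).
rewrite inE /sphere /= in Sc.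
have cmin' u : q c * dotp u u <= q u.
  have [->|u0] := eqVneq u 0; first by rewrite dotp0l mulr0 /q mul0mx dotp0l.
  have du : 0 < dotp u u.
    by rewrite lt0r dotp_ge0 andbT; apply: contra u0 => /eqP /dotp_eq0 ->.
  have := cmin ((norm2 u)^-1 *: u).
  rewrite inE /sphere /= dotpZl dotpZr mulrA -expr2 exprVn norm2_sq mulVf ?gt_eqF //.
  move=> /(_ erefl) H; have E := qZ (norm2 u)^-1 u; rewrite /q in H E *; rewrite E exprVn norm2_sq in H.
  by rewrite -ler_pdivlMr // mulrC.
have symq u w : dotp u (w *m M) = dotp w (u *m M).
  by rewrite dotpC dotp_mulmx MT.
have key : forall w, dotp w (c *m M) - q c * dotp w c = 0.
  move=> w.
  suff : 2 * (dotp w (c *m M) - q c * dotp w c) = 0.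
    by move/eqP; rewrite mulf_eq0 pnatr_eq0 /= => /eqP.
  apply: (@quad_lin0 _ (q w - q c * dotp w w)) => t.
  have := cmin' (c + t *: w).
  rewrite /q !(mulmxDl, dotpDl, dotpDr) -!scalemxAl !(dotpZl, dotpZr) Sc.
  rewrite (symq c w) (dotpC c w) -/(q c) -/(q w).
  rewrite /q; nra.
have eig : c *m M = q c *: c.
  have := key (c *m M - q c *: c).
  rewrite -dotpZr -dotpBr => /dotp_eq0 /eqP; rewrite subr_eq0 => /eqP.
  done.
have c0 : c != 0 by apply/negP => /eqP c0; move: Sc; rewrite c0 dotp0l => /esym/eqP; rewrite oner_eq0.
have Sqc : S (q c) by apply/eigenvalueP; exists c.
have := ge_inf hlb Sqc => hinf.
have := cmin' v.
have : inf S * dotp v v <= q c * dotp v v by rewrite ler_pM2r.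
exact: le_trans.
Qed.

End SIG.

Section SIG2.
Variable R : realType.

Lemma sig_inf_pos n m (A : 'M[R]_(n, m)) : 0 < sigma_min A ->
  0 < inf [set a | eigenvalue (A^T *m A) a] /\ has_lbound [set a | eigenvalue (A^T *m A) a].
Proof.
rewrite /sigma_min sqrtr_gt0 => H; split => //.
have : has_inf [set a | eigenvalue (A^T *m A) a].
  by apply: contrapT => /inf_out E; move: H; rewrite E ltxx.
by case.
Qed.

Lemma sig_unit n m (A : 'M[R]_(n, m)) : 0 < sigma_min A -> A^T *m A \in unitmx.
Proof.
move=> /sig_inf_pos [H1 H2]; rewrite -row_free_unit -kermx_eq0.
apply: contraT => k0.
have : eigenvalue (A^T *m A) 0 by rewrite /eigenvalue /eigenspace (_ : 0%:M = 0) ?subr0 //; apply/matrixP => i j; rewrite !mxE mul0rn.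
move=> /(ge_inf H2) E; move: H1; rewrite ltNge.
by rewrite E.
Qed.

Lemma sig_bound n m (A : 'M[R]_(n, m)) (v : 'rV[R]_m) : 0 < sigma_min A ->
  sigma_min A * norm2 v <= norm2 (v *m A^T).
Proof.
move=> hs; have [H1 H2] := sig_inf_pos hs.
rewrite -(@ler_pXn2r _ 2) ?nnegrE ?mulr_ge0 ?norm2_ge0 //; last exact: ltW.
rewrite exprMn !norm2_sq /sigma_min sqr_sqrtr; last exact: ltW.
rewrite dotp_mulmx trmxK -mulmxA.
apply: rayleigh => //; by rewrite trmx_mul trmxK.
Qed.

End SIG2.

Section OPN.
Variable R : realType.

Lemma norm_le1_coord n (v : 'rV[R]_n) (c : 'rV[R]_n) :
  norm2 v <= 1 -> `|dotp v c| <= norm2 c.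
Proof.
move=> H; apply: le_trans (CSabs v c) _.
by rewrite -[leRHS]mul1r ler_wpM2r // norm2_ge0.
Qed.

Lemma opnorm_set_ub p q (A : 'M[R]_(p, q)) :
  exists K, forall v : 'rV[R]_p, norm2 v <= 1 -> norm2 (v *m A) <= K.
Proof.
pose c j : 'rV[R]_p := \row_i A i j.
exists (Num.sqrt (\sum_j dotp (c j) (c j))) => v Hv.
rewrite /norm2 ler_sqrt; last by rewrite sumr_ge0 // => j _; exact: dotp_ge0.
rewrite {1}/dotp; apply: ler_sum => j _.
have -> : (v *m A) 0 j = dotp v (c j).
  by rewrite mxE /dotp; apply: eq_bigr => i _; rewrite mxE.
rewrite -expr2 -norm2_sq -real_normK ?num_real //.
rewrite ler_pXn2r ?nnegrE ?normr_ge0 ?norm2_ge0 //.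
exact: norm_le1_coord.
Qed.

Lemma opnorm_has_sup p q (A : 'M[R]_(p, q)) :
  has_sup [set norm2 (v *m A) | v in [set v : 'rV[R]_p | norm2 v <= 1]].
Proof.
split.
  by exists (norm2 (0 *m A)), 0 => //=; rewrite norm2_0 ler01.
have [K HK] := opnorm_set_ub A.
by exists K => _ [v Hv <-]; exact: HK.
Qed.

Lemma opnorm_ge0 p q (A : 'M[R]_(p, q)) : 0 <= opnorm A.
Proof.
have [_ hub] := opnorm_has_sup A.
have H := ub_le_sup hub.
have E : norm2 (0 *m A) = 0 by rewrite mul0mx norm2_0.
rewrite -E /opnorm; apply: H.
by exists 0 => //=; rewrite norm2_0 ler01.
Qed.

Lemma opnorm_bound p q (A : 'M[R]_(p, q)) (v : 'rV[R]_p) :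
  norm2 (v *m A) <= opnorm A * norm2 v.
Proof.
have [->|v0] := eqVneq v 0.
  by rewrite mul0mx !norm2_0 mulr0.
have nv : 0 < norm2 v.
  by rewrite lt0r norm2_ge0 andbT; apply: contra v0 => /eqP /norm2_eq0 ->.
have [_ hub] := opnorm_has_sup A.
have H := ub_le_sup hub.
have H1 : norm2 ((norm2 v)^-1 *: v *m A) <= opnorm A.
  rewrite /opnorm; apply: H.
  exists ((norm2 v)^-1 *: v) => //=.
  by rewrite norm2Z ger0_norm ?invr_ge0 ?norm2_ge0 // mulVf // gt_eqF.
move: H1; rewrite -scalemxAl norm2Z ger0_norm ?invr_ge0 ?norm2_ge0 //.
by rewrite ler_pdivrMl // mulrC.
Qed.

Lemma opnorm_bound_tr p q (A : 'M[R]_(p, q)) (w : 'rV[R]_q) :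
  norm2 (w *m A^T) <= opnorm A * norm2 w.
Proof.
set u := w *m A^T.
have [u0|u0] := eqVneq (norm2 u) 0.
  by rewrite u0 mulr_ge0 ?opnorm_ge0 ?norm2_ge0.
have nu : 0 < norm2 u by rewrite lt0r u0 norm2_ge0.
have : norm2 u ^+ 2 <= norm2 u * (opnorm A * norm2 w).
  rewrite norm2_sq {1}/u -dotp_mulmx.
  apply: le_trans (CS _ _) _.
  rewrite mulrA [norm2 u * _]mulrC ler_wpM2r ?norm2_ge0 //.
  exact: opnorm_bound.
by rewrite expr2 ler_pM2l.
Qed.

End OPN.

Section C1.
Variable R : realType.

Lemma diff_of_lin (V W : normedModType R) (f : V -> W) (L : {linear V -> W}) x :
  continuous L -> f \o shift x = cst (f x) + L +o_ 0 id -> differentiable f x.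
Proof. by move=> cL H; apply/diff_locallyP; rewrite (diff_unique cL H); split. Qed.

Definition lf n (c : 'rV[R]_n) (v : 'rV[R]_n) : R := dotp v c.

Lemma lf_linear n (c : 'rV[R]_n) : linear (lf c).
Proof. by move=> a u v; rewrite /lf dotpDl dotpZl. Qed.

HB.instance Definition _ n c := GRing.isLinear.Build R 'rV[R]_n R _ (@lf n c) (@lf_linear n c).

Lemma lf_cont n (c : 'rV[R]_n) : continuous (lf c).
Proof.
rewrite /lf /dotp; apply: cont_sum => i x; apply: continuousM.
  exact: cont_coord.
exact: cst_continuous.
Qed.

Lemma coord_le_norm n (v : 'rV[R]_n) i : `|v 0 i| <= `|v|.
Proof.
rewrite [leRHS]/Num.Def.normr /= mx_normrE.
by apply: le_trans (le_bigmax _ _ (0, i)).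
Qed.

Lemma norm_le_coord n (v : 'rV[R]_n) (M : R) : 0 <= M -> (forall i, `|v 0 i| <= M) -> `|v| <= M.
Proof.
move=> M0 H; rewrite [leLHS]/Num.Def.normr /= mx_normrE.
by apply: bigmax_le => // ij _; rewrite (ord1 ij.1); exact: H.
Qed.

Lemma line_derive n (F : 'rV[R]_n -> R) y v t :
  derivable F (y + t *: v) v ->
  is_derive t 1 (fun s => F (y + s *: v)) ('D_v F (y + t *: v)).
Proof.
have E : (fun h : R => h^-1 *: (((fun s => F (y + s *: v)) \o shift t) (h *: 1) - F (y + t *: v)))
  = (fun h : R => h^-1 *: ((F \o shift (y + t *: v)) (h *: v) - F (y + t *: v))).
  apply: funext => h /=; congr (_ *: (F _ - _)).
  by rewrite scaler1 scalerDl addrCA addrA.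
move=> H; split; first by rewrite /derivable E.
by rewrite /derive E.
Qed.


Lemma mvt_abs (phi D : R -> R) (a : R) : (forall s : R, is_derive s (1 : R) phi (D s)) ->
  exists c0, `|c0| <= `|a| /\ phi a - phi 0 = D c0 * a.
Proof.
move=> dphi.
have cphi : continuous phi.
  move=> s; apply: differentiable_continuous; apply/derivable1_diffP.
  by have [] := dphi s.
have [a0|a0] := leP 0 a.
  have [c0 + E] := MVT_segment a0 (fun s _ => dphi s) (continuous_subspaceT cphi).
  rewrite in_itv /= => /andP [h1 h2].
  exists c0; split; last by rewrite E subr0.
  by rewrite !ger0_norm.
have [c0 + E] := MVT_segment (ltW a0) (fun s _ => dphi s) (continuous_subspaceT cphi).
rewrite in_itv /= => /andP [h1 h2].
exists c0; split.
  by rewrite !ler0_norm ?lerN2 // ltW.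
by apply: (@oppr_inj _); rewrite opprB E sub0r mulrN.
Qed.

Lemma ballE n (x y : 'rV[R]_n) d : ball x d y <-> `|x - y| < d.
Proof. by rewrite -ball_normE. Qed.


Lemma C1_diff n (F : 'rV[R]_n -> R) x :
  (forall y i, derivable F y (ei R i)) ->
  (forall i, {for x, continuous ('D_(ei R i) F)}) ->
  differentiable F x.
Proof.
move=> dF cF.
set c : 'rV[R]_n := \row_i 'D_(ei R i) F x.
apply: (@diff_of_lin _ _ F (@lf n c) x (@lf_cont n c)).
apply/eqaddoP => _/posnumP[eps].
set e' := eps%:num / n.+1%:R.
have e'0 : 0 < e' by rewrite divr_gt0.
have H1 : forall i, \forall y \near x, `|'D_(ei R i) F y - 'D_(ei R i) F x| <= e'.
  move=> i; have := cF i => /cvgrPdist_le /(_ e' e'0).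
  by apply: filter_app; near=> y => H; rewrite distrC.
have := @filter_forall _ _ (fun i y => `|'D_(ei R i) F y - 'D_(ei R i) F x| <= e') (nbhs x) (nbhs_filter x) H1.
move=> /(@nbhs_ballP _ _ x) [d d0 Hd].
apply/(@nbhs_ballP _ _ (0 : 'rV[R]_n)); exists d => // h /ballE; rewrite sub0r normrN => hd.
rewrite /=.
set P := fun k : nat => \row_i (if (i < k)%N then h 0 i else 0) : 'rV[R]_n.
have P0 : P 0%N = 0 by apply/rowP => i; rewrite !mxE.
have Pn : P n = h by apply/rowP => i; rewrite !mxE ltn_ord.
have PS : forall k : 'I_n, P k.+1 = P k + h 0 k *: ei R k.
  move=> k; apply/rowP => i; rewrite !mxE eqxx /=.
  have [->|ik] := eqVneq i k; first by rewrite ltnSn ltnn mulr1 add0r.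
  rewrite mulr0 addr0 ltnS leq_eqVlt.
  by have -> : (nat_of_ord i == nat_of_ord k) = false by apply/negbTE.
have Pnorm : forall (k : 'I_n) t, `|t| <= `|h 0 k| -> `|P k + t *: ei R k| <= `|h|.
  move=> k t ht; apply: norm_le_coord => [|i]; first exact: normr_ge0.
  rewrite !mxE eqxx /=; have [->|ik] := eqVneq i k.
    by rewrite ltnn mulr1 add0r; exact: le_trans ht (coord_le_norm _ _).
  rewrite mulr0 addr0; case: ifP => _; first exact: coord_le_norm.
  by rewrite normr0 normr_ge0.
have term : forall k : 'I_n,
    `|F (x + P k.+1) - F (x + P k) - h 0 k * c 0 k| <= e' * `|h|.
  move=> k; rewrite PS addrA.
  set y := x + P k.
  have [c0 [hc0 E]] := mvt_abs (h 0 k) (fun s => line_derive (dF (y + s *: ei R k) k)).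
  move: E => /=; rewrite scale0r addr0 => ->.
  rewrite mulrC -mulrBr normrM mulrC ler_pM ?normr_ge0 //; last exact: coord_le_norm.
  rewrite mxE; apply: (Hd _ _ k); apply/ballE.
  rewrite /y -addrA opprD addrA subrr add0r normrN.
  exact: le_lt_trans (Pnorm _ _ hc0) hd.
have tele : F (h + x) - F x = \sum_(k < n) (F (x + P k.+1) - F (x + P k)).
  rewrite -(big_mkord xpredT (fun k => F (x + P k.+1) - F (x + P k))).
  by rewrite telescope_sumr // Pn P0 addr0 (addrC h) addrC.
have lfE : lf c h = \sum_(k < n) h 0 k * c 0 k by [].
have -> : (F \o shift x - (cst (F x) + lf c)) h = F (h + x) - (F x + lf c h) by [].
rewrite (_ : F (h + x) - (F x + lf c h) =
    \sum_(k < n) (F (x + P k.+1) - F (x + P k) - h 0 k * c 0 k)); last first.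
  by rewrite opprD addrA tele lfE -sumrB.
apply: le_trans (ler_norm_sum _ _ _) _.
apply: le_trans (ler_sum _ (fun k _ => term k)) _.
rewrite sumr_const card_ord -mulr_natr mulrAC ler_wpM2r ?normr_ge0 //.
rewrite /e' mulrAC ler_pdivrMr ?ltr0Sn // ler_wpM2l //.
by rewrite ler_nat.
Unshelve. all: by end_near.
Qed.


End C1.

Section DF.
Variable R : realType.
Variable V : normedModType R.
Variable x : V.

Lemma dD (f g : V -> R) : differentiable f x -> differentiable g x ->
  differentiable (fun y => f y + g y) x.
Proof. by move=> df dg; apply: differentiableD. Qed.

Lemma dM (f g : V -> R) : differentiable f x -> differentiable g x ->
  differentiable (fun y => f y * g y) x.
Proof. by move=> df dg; apply: differentiableM. Qed.

Lemma dN (f : V -> R) : differentiable f x -> differentiable (fun y => - f y) x.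
Proof. by move=> df; apply: differentiableN. Qed.

Lemma dC (a : R) : differentiable (fun _ : V => a) x.
Proof. exact: differentiable_cst. Qed.

Lemma dB (f g : V -> R) : differentiable f x -> differentiable g x ->
  differentiable (fun y => f y - g y) x.
Proof. by move=> df dg; apply: dD => //; apply: dN. Qed.

Lemma dV (f : V -> R) : differentiable f x -> f x != 0 ->
  differentiable (fun y => (f y)^-1) x.
Proof. by move=> df fx; apply: differentiableV. Qed.

Lemma dsum (I : Type) (r : seq I) (P : pred I) (G : I -> V -> R) :
  (forall i, differentiable (G i) x) ->
  differentiable (fun y => \sum_(i <- r | P i) G i y) x.
Proof.
move=> dG; elim: r => [|a r IH].
  under eq_fun do rewrite big_nil; exact: dC.
under eq_fun do rewrite big_cons.
case: (P a) => //; exact: dD.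
Qed.

Lemma dprod (I : Type) (r : seq I) (P : pred I) (G : I -> V -> R) :
  (forall i, differentiable (G i) x) ->
  differentiable (fun y => \prod_(i <- r | P i) G i y) x.
Proof.
move=> dG; elim: r => [|a r IH].
  under eq_fun do rewrite big_nil; exact: dC.
under eq_fun do rewrite big_cons.
case: (P a) => //; exact: dM.
Qed.

Definition MD p q (M : V -> 'M[R]_(p, q)) := forall i j, differentiable (fun y => M y i j) x.

Lemma MD_mul p q r (M : V -> 'M[R]_(p, q)) (N : V -> 'M[R]_(q, r)) :
  MD M -> MD N -> MD (fun y => M y *m N y).
Proof.
move=> dM' dN' i j; under eq_fun do rewrite mxE.
by apply: dsum => k; apply: dM.
Qed.

Lemma MD_tr p q (M : V -> 'M[R]_(p, q)) : MD M -> MD (fun y => (M y)^T).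
Proof. by move=> dM' i j; under eq_fun do rewrite mxE; exact: dM'. Qed.

Lemma MD_scale p q (c : V -> R) (M : V -> 'M[R]_(p, q)) :
  differentiable c x -> MD M -> MD (fun y => c y *: M y).
Proof. by move=> dc dM' i j; under eq_fun do rewrite mxE; exact: dM. Qed.

Lemma MD_det p (M : V -> 'M[R]_p) : MD M -> differentiable (fun y => \det (M y)) x.
Proof.
move=> dM'; rewrite /determinant.
apply: dsum => s; apply: dM; first exact: dC.
by apply: dprod => i; exact: dM'.
Qed.

Lemma MD_adj p (M : V -> 'M[R]_p) : MD M -> MD (fun y => \adj (M y)).
Proof.
move=> dM' i j; under eq_fun do rewrite mxE.
rewrite /cofactor; apply: dM; first exact: dC.
apply: MD_det => a b; under eq_fun do rewrite !mxE; exact: dM'.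
Qed.

Lemma diff_of_lin' (W : normedModType R) (f : V -> W) (L : {linear V -> W}) :
  continuous L -> f \o shift x = cst (f x) + L +o_ 0 id -> differentiable f x.
Proof. by move=> cL H; apply/diff_locallyP; rewrite (diff_unique cL H); split. Qed.

Lemma diff_near (f g : V -> R) :
  differentiable f x -> (\forall y \near x, f y = g y) -> differentiable g x.
Proof.
move=> df efg.
have gx : f x = g x by apply: nbhs_singleton efg.
apply: (@diff_of_lin' _ g ('d f x)); first exact: diff_continuous.
apply/eqaddoP => e e0.
have /eqaddoP /(_ e e0) H := diff_locally df.
move: efg; rewrite (near_shift 0 x) => efg.
near=> h.
have E : f (h + x) = g (h + x).
  by near: h; apply: filterS efg => z /=; rewrite subr0.
have H2 : `|(f \o shift x - (cst (f x) + 'd f x)) h| <= e * `|h| by near: h; exact: H.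
have -> : (g \o shift x - (cst (g x) + 'd f x)) h = g (h + x) - (g x + 'd f x h) by [].
move: H2; have -> : (f \o shift x - (cst (f x) + 'd f x)) h = f (h + x) - (f x + 'd f x h) by [].
by rewrite E gx.
Unshelve. all: by end_near.
Qed.

End DF.

Section ISD.
Variable R : realType.
Variable V : normedModType R.
Variables x v : V.

Lemma idD (f g : V -> R) df dg : is_derive x v f df -> is_derive x v g dg ->
  is_derive x v (fun y => f y + g y) (df + dg).
Proof. by move=> [f1 <-] [g1 <-]; split; [exact: derivableD | exact: deriveD]. Qed.

Lemma idN (f : V -> R) df : is_derive x v f df -> is_derive x v (fun y => - f y) (- df).
Proof. by move=> [f1 <-]; split; [exact: derivableN | exact: deriveN]. Qed.

Lemma idB (f g : V -> R) df dg : is_derive x v f df -> is_derive x v g dg ->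
  is_derive x v (fun y => f y - g y) (df - dg).
Proof. by move=> H1 H2; apply: idD => //; apply: idN. Qed.

Lemma idM (f g : V -> R) df dg : is_derive x v f df -> is_derive x v g dg ->
  is_derive x v (fun y => f y * g y) (f x * dg + g x * df).
Proof. by move=> [f1 <-] [g1 <-]; split; [exact: derivableM | exact: deriveM]. Qed.

Lemma idC (a : R) : is_derive x v (fun _ : V => a) 0.
Proof. split; [exact: derivable_cst | exact: derive_cst]. Qed.

Lemma idsum (I : Type) (r : seq I) (G : I -> V -> R) (dG : I -> R) :
  (forall i, is_derive x v (G i) (dG i)) ->
  is_derive x v (fun y => \sum_(i <- r) G i y) (\sum_(i <- r) dG i).
Proof.
move=> H; elim: r => [|a r IH].
  rewrite big_nil; under eq_fun do rewrite big_nil; exact: idC.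
rewrite big_cons; under eq_fun do rewrite big_cons.
exact: idD.
Qed.

Lemma id_diff (f : V -> R) : differentiable f x -> is_derive x v f ('d f x v).
Proof. by move=> df; split; [exact: diff_derivable | exact: deriveE]. Qed.

Lemma id_uniq (f : V -> R) d : is_derive x v f d -> 'D_v f x = d.
Proof. by case. Qed.

End ISD.

Section VEC.
Variable R : realType.
Variable V : normedModType R.

Lemma comp_derivable m (H : V -> 'rV[R]_m) y v j :
  derivable H y v -> derivable (fun z => H z 0 j) y v.
Proof. by move=> /derivable_mxP; apply. Qed.

Lemma comp_derive m (H : V -> 'rV[R]_m) y v j :
  derivable H y v -> 'D_v (fun z => H z 0 j) y = ('D_v H y) 0 j.
Proof. by move=> dH; rewrite derive_mx // mxE. Qed.

Lemma comp_cont m (H : V -> 'rV[R]_m) j : continuous H -> continuous (fun z => H z 0 j).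
Proof. by move=> cH y; exact: (continuous_comp (cH y) (@coord_continuous R 1 m 0 j (H y))). Qed.

Lemma vec_diff m (H : V -> 'rV[R]_m) y :
  (forall j, differentiable (fun z => H z 0 j) y) -> differentiable H y.
Proof.
move=> dH.
have -> : H = \sum_(j < m) (fun z => H z 0 j *: delta_mx 0 j).
  apply: funext => z; rewrite fct_sumE; apply/rowP => k.
  rewrite summxE (bigD1 k) //= big1 ?addr0.
    by rewrite !mxE !eqxx mulr1.
  by move=> i ik; rewrite !mxE eqxx /= eq_sym (negbTE ik) mulr0.
by apply: differentiable_sum => j; apply: differentiableZl.
Qed.

End VEC.

Section FIN.
Variable R : realType.

Lemma final_ineq (b sg C e a s gm : R) :
  0 < sg -> 0 <= C -> C / sg < b -> sg^-1 < b -> 0 <= e -> 0 <= a -> 0 <= s ->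
  sg * a <= s -> 2 * b * s ^+ 2 <= e * s + C * a * s ->
  gm ^+ 2 <= gm * (e + C * a) -> 0 <= gm ->
  [/\ a <= e / (b * sg), e / (b * sg) <= e, gm <= (1 + C / (b * sg)) * e,
      (1 + C / (b * sg)) * e <= 2 * e & (a <= e /\ gm <= 2 * e)].
Proof.
move=> sg0 C0 hC hs e0 a0 s0 hsa hq hg gm0.
have hb1 : 1 < b * sg by rewrite -ltr_pdivrMr // div1r.
have hbC : C < b * sg by rewrite -ltr_pdivrMr.
have b0 : 0 < b by apply: lt_trans hs; rewrite invr_gt0.
have bs0 : 0 < b * sg by rewrite mulr_gt0.
have ha : a <= e / (b * sg).
  rewrite ler_pdivlMr //.
  have [s00|s00] := eqVneq s 0.
    have : sg * a <= 0 by rewrite -s00.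
    rewrite pmulr_rle0 // => a00; have -> : a = 0 by apply/eqP; rewrite eq_le a00 a0.
    by rewrite mul0r.
  have sp : 0 < s by rewrite lt0r s00 s0.
  have : 2 * b * s <= e + C * a.
    rewrite -(ler_pM2r sp) mulrDl; nra.
  nra.
have h2 : e / (b * sg) <= e.
  by rewrite ler_pdivrMr // ler_peMr //; exact: ltW.
have hCr : C / (b * sg) <= 1 by rewrite ler_pdivrMr // mul1r ltW.
have hCr0 : 0 <= C / (b * sg) by rewrite divr_ge0 // ltW.
have hgm : gm <= e + C * a.
  have [g00|g00] := eqVneq gm 0; first by rewrite g00; nra.
  have gp : 0 < gm by rewrite lt0r g00 gm0.
  by rewrite -(ler_pM2l gp) -expr2.
have h3 : gm <= (1 + C / (b * sg)) * e.
  apply: le_trans hgm _.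
  rewrite mulrDl mul1r lerD2l mulrAC -mulrA ler_wpM2l // mulrC.
split => //; first nra.
split; first exact: le_trans ha h2.
by apply: le_trans h3 _; nra.
Qed.

Lemma hq_arith (b s e a C d1 d2 : R) : d1 = 2 * b * s ^+ 2 - d2 -> d1 <= e * s ->
  d2 <= C * a * s -> 2 * b * s ^+ 2 <= e * s + C * a * s.
Proof. move=> E c1 c2; rewrite E in c1; lra. Qed.

End FIN.

Section PI.
Variable R : realType.

Lemma penrose_formula n m (A : 'M[R]_(n, m)) :
  A^T *m A \in unitmx -> penrose A^T (A *m invmx (A^T *m A)).
Proof.
move=> uM; set M := A^T *m A.
have MT : M^T = M by rewrite /M trmx_mul trmxK.
split.
- by rewrite mulmxA -/M mulmxV // mul1mx.
- by rewrite -!mulmxA (mulmxA A^T) -/M (mulmxA (invmx M)) mulVmx // mul1mx.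
- by rewrite mulmxA -/M mulmxV // trmx1.
- by rewrite !trmx_mul trmx_inv MT trmxK mulmxA.
Qed.

Lemma penrose_uniq n m (A : 'M[R]_(n, m)) X :
  A^T *m A \in unitmx -> penrose A^T X -> X = A *m invmx (A^T *m A).
Proof.
move=> uM [h1 h2 h3 h4]; set M := A^T *m A.
have e4 : X *m A^T = A *m X^T by rewrite -h4 trmx_mul trmxK.
have eX : X = A *m (X^T *m X) by rewrite mulmxA -e4 h2.
set Y := X^T *m X in eX.
have e1 : M *m (Y *m A^T) = A^T.
  by rewrite /M mulmxA -(mulmxA A^T A Y) -eX h1.
have e2 : Y *m A^T = invmx M *m A^T by rewrite -[in RHS]e1 mulKmx.
have e3 : Y = invmx M.
  have -> : Y = Y *m M *m invmx M by rewrite -mulmxA mulmxV // mulmx1.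
  rewrite /M mulmxA e2 -mulmxA -/M -mulmxA (mulmxA A^T A) -/M mulKmx //.
by rewrite eX e3.
Qed.

End PI.

Section M1.
Variable R : realType.
Variables n m : nat.

Lemma smooth_real (f : 'rV[R]_n -> R) : smooth f ->
  [/\ forall y, differentiable f y,
      forall k y, differentiable ('D_(ei R k) f) y
    & forall y, grad f y = \row_i 'D_(ei R i) f y].
Proof.
move=> sf.
have f0 y i : derivable f y (ei R i) := (sf [::]).1 y i.
have f1 k : continuous ('D_(ei R k) f) := (sf [:: k]).2.
have f2 k y i : derivable ('D_(ei R k) f) y (ei R i) := (sf [:: k]).1 y i.
have f3 k i : continuous ('D_(ei R i) ('D_(ei R k) f)) := (sf [:: i; k]).2.
have fd y : differentiable f y by apply: C1_diff => // i; exact: f1.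
split => //.
  by move=> k y; apply: C1_diff => // i; exact: f3.
by move=> y; apply/rowP => i; rewrite !mxE deriveE.
Qed.

Lemma smooth_vec (h : 'rV[R]_n -> 'rV[R]_m) : smooth h ->
  [/\ forall y, differentiable h y,
      forall j y, differentiable (fun z => h z 0 j) y,
      forall k j y, differentiable (fun z => ('D_(ei R k) h z) 0 j) y,
      forall k j y, 'D_(ei R k) (fun z => h z 0 j) y = ('D_(ei R k) h y) 0 j
    & forall y, jac h y = \matrix_(i, j) ('D_(ei R i) h y) 0 j].
Proof.
move=> sh.
have h0 y i : derivable h y (ei R i) := (sh [::]).1 y i.
have h1 k : continuous ('D_(ei R k) h) := (sh [:: k]).2.
have h2 k y i : derivable ('D_(ei R k) h) y (ei R i) := (sh [:: k]).1 y i.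
have h3 k i : continuous ('D_(ei R i) ('D_(ei R k) h)) := (sh [:: i; k]).2.
have cE k j y : 'D_(ei R k) (fun z => h z 0 j) y = ('D_(ei R k) h y) 0 j.
  exact: comp_derive.
have hjd j y : differentiable (fun z => h z 0 j) y.
  apply: C1_diff => [z i|i]; first exact: comp_derivable.
  have -> : 'D_(ei R i) (fun z => h z 0 j) = fun z => ('D_(ei R i) h z) 0 j.
    by apply: funext => z; rewrite cE.
  exact: comp_cont.
have hd y : differentiable h y by apply: vec_diff.
split => //.
- move=> k j y; apply: C1_diff => [z i|i]; first exact: comp_derivable.
  have -> : 'D_(ei R i) (fun z => ('D_(ei R k) h z) 0 j) =
      fun z => ('D_(ei R i) ('D_(ei R k) h) z) 0 j.
    by apply: funext => z; rewrite comp_derive.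
  exact: comp_cont.
- by move=> y; apply/matrixP => i j; rewrite !mxE deriveE.
Qed.


Lemma pinv_eq (A : 'M[R]_(n, m)) : A^T *m A \in unitmx -> mp_pinv A^T = A *m invmx (A^T *m A).
Proof.
move=> u; apply: penrose_uniq => //; rewrite /mp_pinv; apply: xgetPex.
by exists (A *m invmx (A^T *m A)); exact: penrose_formula.
Qed.

Lemma lam_diff (f : 'rV[R]_n -> R) (h : 'rV[R]_n -> 'rV[R]_m) x :
  smooth f -> smooth h -> (jac h x)^T *m jac h x \in unitmx ->
  differentiable (lam f h) x.
Proof.
move=> sf sh ux.
have [fd Dfd gE] := smooth_real sf.
have [hd hjd Dhd cE jE] := smooth_vec sh.
set Mf := fun y => (jac h y)^T *m jac h y.
have MDg : MD x (fun y => grad f y).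
  by move=> i j; under eq_fun do rewrite gE mxE; exact: Dfd.
have MDj : MD x (jac h).
  by move=> i j; under eq_fun do rewrite jE mxE; exact: Dhd.
have MDM : MD x Mf := MD_mul (MD_tr MDj) MDj.
set dt := fun y => \det (Mf y).
have ddt : differentiable dt x := MD_det MDM.
have dt0 : dt x != 0 by rewrite /dt -unitfE -unitmxE.
have near0 : \forall y \near x, dt y != 0.
  exact: cvgr_neq0 (differentiable_continuous ddt) dt0.
set lt := fun y => grad f y *m (jac h y *m ((dt y)^-1 *: \adj (Mf y))).
have MDlt : MD x lt := MD_mul MDg (MD_mul MDj (MD_scale (dV ddt dt0) (MD_adj MDM))).
apply: vec_diff => j.
apply: (diff_near (MDlt 0 j)).
near=> y.
have hy : dt y != 0 by near: y.
rewrite /lam pinv_eq; last by rewrite unitmxE unitfE.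
by rewrite /invmx unitmxE unitfE hy.
Unshelve. all: by end_near.
Qed.

End M1.

Section M2.
Variable R : realType.
Variables n m : nat.

Lemma idd (F : 'rV[R]_n -> R) x v : differentiable F x -> is_derive x v F ('D_v F x).
Proof. by move=> dF; apply: derivableP; exact: diff_derivable. Qed.

Lemma fletcher_grad (f : 'rV[R]_n -> R) (h : 'rV[R]_n -> 'rV[R]_m) beta x :
  smooth f -> smooth h -> (jac h x)^T *m jac h x \in unitmx ->
  grad (fletcher f h beta) x =
  gradM f h x + (2 * beta) *: (h x *m (jac h x)^T) - h x *m (jac (lam f h) x)^T.
Proof.
move=> sf sh ux.
have [fd Dfd gE] := smooth_real sf.
have [hd hjd Dhd cE jE] := smooth_vec sh.
have ld := lam_diff sf sh ux.
set L := lam f h.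
have Ljd j : differentiable (fun z => L z 0 j) x.
  exact: (differentiable_comp ld (differentiable_coord _ 0 j)).
have LjE i j : (jac L x) i j = 'D_(ei R i) (fun z => L z 0 j) x.
  by rewrite mxE -deriveE // comp_derive //; exact: diff_derivable.
have Fe : fletcher f h beta = fun y => f y - \sum_j h y 0 j * L y 0 j +
    beta * \sum_j h y 0 j * h y 0 j.
  by apply: funext => y; rewrite /fletcher norm2_sq.
have Gd : differentiable (fletcher f h beta) x.
  rewrite Fe; apply: dD; first apply: dB => //.
    by apply: dsum => j; apply: dM.
  by apply: dM; [exact: dC | apply: dsum => j; apply: dM].
apply/rowP => i; rewrite [LHS]mxE -deriveE //.
have D1 := idd (ei R i) (fd x).
have D2 : is_derive x (ei R i) (fun y => \sum_j h y 0 j * L y 0 j)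
   (\sum_j (h x 0 j * 'D_(ei R i) (fun z => L z 0 j) x + L x 0 j * 'D_(ei R i) (fun z => h z 0 j) x)).
  by apply: idsum => j; apply: idM; apply: idd.
have D3 : is_derive x (ei R i) (fun y => \sum_j h y 0 j * h y 0 j)
   (\sum_j (h x 0 j * 'D_(ei R i) (fun z => h z 0 j) x + h x 0 j * 'D_(ei R i) (fun z => h z 0 j) x)).
  by apply: idsum => j; apply: idM; apply: idd.
have D := idD (idB D1 D2) (idM (idC x (ei R i) beta) D3).
rewrite Fe (id_uniq D).
have AE i' j : (jac h x) i' j = 'D_(ei R i') (fun z => h z 0 j) x.
  by rewrite jE mxE cE.
rewrite /gradM -/L.
move: (LjE) (AE); set J := jac L x; set A := jac h x; set gfx := grad f x.
have gfxE : gfx 0 i = 'D_(ei R i) f x by rewrite /gfx gE mxE.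
move: gfxE; clearbody J A gfx L => gfxE LjE' AE'.
rewrite !mxE gfxE.
have S1 : \sum_j L x 0 j * A^T j i = \sum_j L x 0 j * 'D_(ei R i) (fun z => h z 0 j) x.
  by apply: eq_bigr => j _; rewrite mxE AE'.
have S2 : \sum_j h x 0 j * A^T j i = \sum_j h x 0 j * 'D_(ei R i) (fun z => h z 0 j) x.
  by apply: eq_bigr => j _; rewrite mxE AE'.
have S3 : \sum_j h x 0 j * J^T j i = \sum_j h x 0 j * 'D_(ei R i) (fun z => L z 0 j) x.
  by apply: eq_bigr => j _; rewrite mxE LjE'.
rewrite S1 S2 S3 mulr0 addr0 !big_split /=; ring.
Qed.
End M2.

Unset Implicit Arguments.

Theorem mainTheorem2 (R : realType) (n m : nat)
  (f : 'rV[R]_n -> R) (h : 'rV[R]_n -> 'rV[R]_m)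
  (Rad sig : R) (eps1 beta : R) (x : 'rV[R]_n) :
  smooth f -> smooth h ->
  (* (A1) *)
  0 < Rad -> 0 < sig ->
  (forall y : 'rV[R]_n, norm2 (h y) <= Rad -> sig <= sigma_min (jac h y)) ->
  0 <= eps1 ->
  norm2 (h x) <= Rad ->
  Num.max (beta2 f h x) (beta3 h x) < beta ->
  norm2 (grad (fletcher f h beta) x) <= eps1 ->
  [/\ norm2 (h x) <= eps1 / (beta * sigma_min (jac h x)),
      eps1 / (beta * sigma_min (jac h x)) <= eps1,
      norm2 (gradM f h x) <= (1 + C_lam f h x / (beta * sigma_min (jac h x))) * eps1,
      (1 + C_lam f h x / (beta * sigma_min (jac h x))) * eps1 <= 2 * eps1
    & approx_crit f h eps1 (2 * eps1) x].
Proof.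
move=> sf sh Rad0 sig0 A1 eps0 hxR hbeta hgrad.
have sA : sig <= sigma_min (jac h x) := A1 x hxR.
have sp : 0 < sigma_min (jac h x) := lt_le_trans sig0 sA.
have ux : (jac h x)^T *m jac h x \in unitmx := sig_unit sp.
have rk : inD h x.
  rewrite /inD; apply/eqP; rewrite eqn_leq rank_leq_col /=.
  by rewrite -{1}(mxrank_unit ux) mxrankM_maxr.
rewrite /approx_crit.
have gE := fletcher_grad beta sf sh ux.
have gmA : gradM f h x *m jac h x = 0.
  rewrite /gradM /lam pinv_eq //.
  set A := jac h x; set gf := grad f x.
  rewrite mulmxBl -!mulmxA mulVmx // mulmx1 subrr //.
move: gE gmA hgrad sp ux.
set A := jac h x; set u := h x; set gm := gradM f h x; set J := jac (lam f h) x.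
set gd := grad (fletcher f h beta) x.
rewrite /beta2 /beta3 /C_lam -/A -/J in hbeta *.
set C := opnorm J in hbeta *; set sg := sigma_min A in hbeta *.
move=> gE gmA hgrad sp ux.
clearbody gd gm u J A.
have orth w : dotp gm (w *m A^T) = 0 by rewrite -dotp_mulmx gmA dotp0l.
have i1 : sg * norm2 u <= norm2 (u *m A^T) := sig_bound u sp.
have i2 : norm2 (u *m J^T) <= C * norm2 u := opnorm_bound_tr J u.
have C0 : 0 <= C := opnorm_ge0 J.
set s := norm2 (u *m A^T).
have s0 : 0 <= s := norm2_ge0 _.
have hq : 2 * beta * s ^+ 2 <= eps1 * s + C * norm2 u * s.
  have E : dotp gd (u *m A^T) = 2 * beta * s ^+ 2 - dotp (u *m J^T) (u *m A^T).
    by rewrite gE !dotpBl dotpDl orth dotpZl norm2_sq add0r.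
  have c1 : dotp gd (u *m A^T) <= eps1 * s.
    by apply: le_trans (CS _ _) _; apply: ler_wpM2r.
  have c2 : dotp (u *m J^T) (u *m A^T) <= C * norm2 u * s.
    apply: le_trans (ler_norm _) _; apply: le_trans (CSabs _ _) _.
    exact: ler_wpM2r.
  exact: hq_arith E c1 c2.
have hg : norm2 gm ^+ 2 <= norm2 gm * (eps1 + C * norm2 u).
  have E : gm = gd - (2 * beta) *: (u *m A^T) + u *m J^T.
    by rewrite gE [gm + _ - _ - _]addrAC addrK subrK.
  have F : norm2 gm ^+ 2 = dotp gm gd + dotp gm (u *m J^T).
    by rewrite norm2_sq {2}E !dotpDr dotpNr dotpZr orth mulr0 oppr0 addr0.
  rewrite F mulrDr; apply: lerD.
    by apply: le_trans (CS _ _) _; apply: ler_wpM2l => //; exact: norm2_ge0.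
  apply: le_trans (CS _ _) _; apply: ler_wpM2l => //; exact: norm2_ge0.
move: hbeta; rewrite gt_max => /andP [hb2 hb3].
have [r1 r2 r3 r4 [r5 r6]] := final_ineq sp C0 hb2 hb3 eps0 (norm2_ge0 u) s0 i1 hq hg
   (norm2_ge0 gm).
by split => //; split.
Qed.
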